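(* Let $q\ge 4$ be even and $n\ge 3$ be odd. There does not exist an ordering $G(0),G(1),\ldots,G(q^n-1)$ of all of $\mathbb{Z}_q^n$ (indices taken modulo $q^n$) such that consecutive words $G(i),G(i+1)$ are at Lee distance $1$, and such that for every $i$ there is $\epsilon_i\in\{1,-1\}$ with $G(i)+(1,1,\ldots,1)=G(i+q^{n-1}+\epsilon_i)$.
   Context: The Lee distance between $v=(v_1,\ldots,v_n)$ and $u=(u_1,\ldots,u_n)$ in $\mathbb{Z}_q^n$ is $\sum_{i=1}^n \min\{|v_i-u_i|,\,q-|v_i-u_i|\}$, where $v_i,u_i$ are regarded as integers in $\{0,\ldots,q-1\}$. Addition of words is componentwise in $\mathbb{Z}_q$. *)

(* Defs.v *)
From mathcomp Require Import all_boot all_order all_algebra.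
Set Implicit Arguments. Unset Strict Implicit. Unset Printing Implicit Defensive.
Import GRing.Theory.

(* Words of Z_q^n are row vectors 'rV['Z_q]_n (q >= 2 assumed where used). *)

Definition lee_sym (q : nat) (a b : 'Z_q) : nat :=
  let d := if (val a <= val b)%N then (val b - val a)%N else (val a - val b)%N in
  minn d (q - d).

Definition lee_dist (q n : nat) (v u : 'rV['Z_q]_n) : nat :=
  (\sum_(i < n) @lee_sym q (v ord0 i) (u ord0 i))%N.

(* Main.v *)
Require Import Defs.
From mathcomp Require Import all_boot all_order all_algebra.
From mathcomp Require Import zify ring.
Import GRing.Theory.
Local Open Scope ring_scope.
Set Implicit Arguments. Unset Strict Implicit. Unset Printing Implicit Defensive.

Section Zq.
Variable r : nat.
Hypothesis r_gt0 : (0 < r)%N.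
Hypothesis r_even : ~~ odd r.
Local Notation Zq := ('Z_(r.+2)).

Lemma zvalD (x y : Zq) : val (x + y) = ((val x + val y) %% r.+2)%N.
Proof. by []. Qed.
Lemma zvalN (x : Zq) : val (- x) = ((r.+2 - val x) %% r.+2)%N.
Proof. by []. Qed.
Lemma zval1 : val (1 : Zq) = 1%N.
Proof. by rewrite /= modn_small. Qed.
Lemma zvalm1 : val (-1 : Zq) = r.+1.
Proof. rewrite zvalN zval1 modn_small; lia. Qed.
Lemma one_neq_m1 : (1 : Zq) != -1.
Proof. apply/eqP=> /(congr1 val); rewrite zval1 zvalm1; lia. Qed.
Lemma two_neq0 : (1 + 1 : Zq) != 0.
Proof. apply/eqP=> /(congr1 val); rewrite zvalD zval1 /= modn_small; lia. Qed.
Lemma m2_neq0 : (-1 + -1 : Zq) != 0.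
Proof. rewrite -opprD oppr_eq0; exact: two_neq0. Qed.
End Zq.

Section Zq.
Variable r : nat.
Hypothesis r_gt0 : (0 < r)%N.
Local Notation Zq := ('Z_(r.+2)).

Lemma valsub1 (x : Zq) : val (x - 1) = if val x == 0%N then r.+1 else (val x).-1.
Proof.
rewrite zvalD zvalN zval1 (modn_small (m := (r.+2 - 1)%N)); last lia.
have : (val x < r.+2)%N := ltn_ord x; case: eqP => [->|?] ?; first by rewrite modn_small.
have -> : (val x + (r.+2 - 1) = (val x).-1 + r.+2)%N by lia.
by rewrite modnDr modn_small; lia.
Qed.
Lemma valadd1 (x : Zq) : val (x + 1) = if val x == r.+1 then 0%N else (val x).+1.
Proof.
rewrite zvalD zval1; have : (val x < r.+2)%N := ltn_ord x; case: eqP => [->|?] ?; first by rewrite addn1 modnn.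
by rewrite modn_small; lia.
Qed.

Lemma lee_sym0 (a b : Zq) : lee_sym a b = 0%N -> a = b.
Proof.
rewrite /lee_sym; have : (val a < r.+2)%N := ltn_ord a; have : (val b < r.+2)%N := ltn_ord b.
move=> ha hb; apply: contra_eq => nab.
have : val a != val b by apply: contra nab => /eqP /val_inj ->.
case: leqP => ? ?; lia.
Qed.

Lemma lee_sym1 (a b : Zq) : lee_sym a b = 1%N -> b = a + 1 \/ b = a - 1.
Proof.
rewrite /lee_sym => H; have ha : (val a < r.+2)%N := ltn_ord a; have hb : (val b < r.+2)%N := ltn_ord b.
have [E|E] : (val b = (val a).+1 \/ val a = (val b).+1) \/
      (val b = r.+1 /\ val a = 0 \/ val a = r.+1 /\ val b = 0)%N.
- move: H; case: leqP => ? ?; lia.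
- case: E => E; [left|right]; apply: val_inj.
    by rewrite valadd1 E; case: eqP => //; lia.
  by rewrite valsub1 E.
- case: E => -[E1 E2]; [right|left]; apply: val_inj.
    by rewrite valsub1 E1 E2.
  by rewrite valadd1 E1 E2 eqxx.
Qed.
End Zq.

Definition uv r n (k : 'I_n) (t : 'Z_(r.+2)) : 'rV['Z_(r.+2)]_n :=
  \row_j (if j == k then t else 0).
Definition pm r (t : 'Z_(r.+2)) := (t == 1) || (t == -1).
Definition unitv r n (w : 'rV['Z_(r.+2)]_n) := exists k t, pm t /\ w = uv k t.

Lemma uvE r n (k j : 'I_n) (t : 'Z_(r.+2)) : uv k t ord0 j = if j == k then t else 0.
Proof. by rewrite mxE. Qed.

Lemma lee1 r n (v u : 'rV['Z_(r.+2)]_n) : (0 < r)%N -> lee_dist v u = 1%N -> unitv (u - v).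
Proof.
move=> r0; rewrite /lee_dist => H.
have [k Hk] : exists k, lee_sym (v ord0 k) (u ord0 k) != 0%N.
  apply/existsP; apply: contraT; rewrite negb_exists => /forallP A.
  move: H; rewrite big1 // => i _; by have := A i; rewrite negbK => /eqP.
move: H; rewrite (bigD1 k) //= => H.
have Hk1 : lee_sym (v ord0 k) (u ord0 k) = 1%N by move: Hk H; lia.
move: H; rewrite Hk1 add1n => -[] /eqP; rewrite sum_nat_eq0 => /forallP Hr.
exists k, (u ord0 k - v ord0 k); split.
  by case: (lee_sym1 r0 Hk1) => ->; rewrite /pm addrAC subrr add0r eqxx ?orbT.
apply/matrixP => i j; rewrite (ord1 i) uvE !mxE.
case: eqP => [->|/eqP jk]; first by [].
have := Hr j; rewrite jk /= => /eqP /lee_sym0 E.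
have E' : v 0 j = u 0 j := E r0.
by rewrite E' subrr.
Qed.

Definition phi r n (k0 : 'I_n) (w : 'rV['Z_(r.+2)]_n) : nat :=
  (\sum_(j < n | j != k0) val (w ord0 j))%N.

Section D.
Variable r n : nat.
Hypothesis r_gt0 : (0 < r)%N.
Hypothesis r_even : ~~ odd r.
Local Notation Zq := ('Z_(r.+2)).

Lemma phi_add (k0 : 'I_n) (x y : 'rV[Zq]_n) :
  phi k0 (x + y) = (phi k0 x + phi k0 y)%N %[mod 2].
Proof.
have h2 : (2 %| r.+2)%N by rewrite dvdn2 /= negbK.
rewrite /phi -modn_summ.
under eq_bigr => j _ do rewrite mxE zvalD (modn_dvdm _ h2).
by rewrite modn_summ big_split.
Qed.

Lemma phi_uv (k0 k : 'I_n) (t : Zq) :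
  phi k0 (uv k t) = if k == k0 then 0%N else val t.
Proof.
rewrite /phi; case: eqP => [<-|/eqP kk0].
  by rewrite big1 // => j jk; rewrite uvE (negbTE jk).
rewrite (bigD1 k) //= uvE eqxx big1 ?addn0 // => j /andP [_ jk].
by rewrite uvE (negbTE jk).
Qed.

Lemma phi_const1 (k0 : 'I_n) : phi k0 (const_mx (1 : Zq)) = n.-1.
Proof.
rewrite /phi; under eq_bigr => j _ do rewrite mxE zval1.
by rewrite sum1_card cardC1 card_ord.
Qed.

Lemma uvD (k : 'I_n) (x y : Zq) : uv k x + uv k y = uv k (x + y).
Proof. by apply/matrixP => i j; rewrite !mxE; case: eqP; rewrite ?addr0. Qed.
Lemma uv0 (k : 'I_n) : uv k (0 : Zq) = 0.
Proof. by apply/matrixP => i j; rewrite !mxE; case: eqP. Qed.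
Lemma uvN (k : 'I_n) (x : Zq) : - uv k x = uv k (- x).
Proof. by apply/matrixP => i j; rewrite !mxE; case: eqP; rewrite ?oppr0. Qed.

Lemma pm_neq0 (x : Zq) : pm x -> x != 0.
Proof.
case/orP => /eqP ->; apply/eqP => /(congr1 val); rewrite ?zvalm1 ?zval1 //.
Qed.
Lemma pm_sum (x y : Zq) : pm x -> pm y -> x + y != 0 -> y = x.
Proof.
case/orP => /eqP -> /orP [] /eqP -> //; by rewrite ?subrr ?addNr eqxx.
Qed.
Lemma pm_odd (x : Zq) : pm x -> odd (val x).
Proof. by case/orP => /eqP ->; rewrite ?zvalm1 ?zval1 //= r_even. Qed.
End D.

Section E.
Variable r n : nat.
Hypothesis r_gt0 : (0 < r)%N.
Hypothesis r_even : ~~ odd r.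
Local Notation Zq := ('Z_(r.+2)).

Lemma classify (k0 : 'I_n) (s : Zq) (c b v : 'rV[Zq]_n) :
  pm s -> unitv c -> unitv b -> unitv v ->
  uv k0 s + c != 0 -> c + b != 0 -> uv k0 s + c + b = v ->
  (b = - uv k0 s /\ odd (phi k0 c)) \/ (b = uv k0 s /\ ~~ odd (phi k0 c)).
Proof.
move=> ps [kc [t [pt ->]]] [kb [t' [pt' ->]]] [kv [t'' [pt'' ->]]] ac cb E.
have Ej j : (if j == k0 then s else 0) + (if j == kc then t else 0)
     + (if j == kb then t' else 0) = (if j == kv then t'' else 0).
  by have := congr1 (fun w : 'rV[Zq]_n => w ord0 j) E; rewrite !mxE.
have nt := pm_neq0 r_gt0 r_even pt; have nt' := pm_neq0 r_gt0 r_even pt'; have nt'' := pm_neq0 r_gt0 r_even pt''.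
have ns := pm_neq0 r_gt0 r_even ps.
rewrite phi_uv.
case: (eqVneq kc k0) => [ekc|nkc].
- subst kc.
  have st : s + t != 0 by apply: contraNneq ac => h; rewrite uvD h uv0.
  have ets := pm_sum ps pt st.
  case: (eqVneq kb k0) => [ekb|nkb].
  + subst kb; right; split => //.
    have tt' : t + t' != 0 by apply: contraNneq cb => h; rewrite uvD h uv0.
    by rewrite (pm_sum pt pt' tt') ets.
  + exfalso.
    have := Ej kb; rewrite eqxx (negbTE nkb) !add0r.
    case: (eqVneq kb kv) => [ekv|_ h]; last by move: nt'; rewrite h eqxx.
    subst kv => _.
    have nbk : k0 != kb by rewrite eq_sym.
    have := Ej k0; rewrite eqxx (negbTE nbk) addr0 => h.
    by move: st; rewrite h eqxx.
- case: (eqVneq kb k0) => [ekb|nkb].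
  + subst kb; left; rewrite (pm_odd r_gt0 r_even) //; split => //.
    have nck : k0 != kc by rewrite eq_sym.
    have := Ej kc; rewrite eqxx (negbTE nkc) add0r addr0.
    case: (eqVneq kc kv) => [ekv|_ h]; last by move: nt; rewrite h eqxx.
    subst kv => _.
    have := Ej k0; rewrite eqxx (negbTE nck) addr0 => /eqP.
    by rewrite addr_eq0 => /eqP ->; rewrite uvN opprK.
  + exfalso.
    have nck : k0 != kc by rewrite eq_sym.
    have nbk : k0 != kb by rewrite eq_sym.
    have := Ej k0; rewrite eqxx (negbTE nck) (negbTE nbk) !addr0.
    case: (eqVneq k0 kv) => [ekv|_ h]; last by move: ns; rewrite h eqxx.
    subst kv => _.
    have := Ej kc; rewrite eqxx (negbTE nkc) add0r.
    case: (eqVneq kc kb) => [ekb|nb]; last by rewrite addr0 => h; move: nt; rewrite h eqxx.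
    subst kb => h; move: cb; by rewrite uvD h uv0 eqxx.
Qed.
End E.

Lemma phi0 r n (k0 : 'I_n) : phi k0 (0 : 'rV['Z_(r.+2)]_n) = 0%N.
Proof. by rewrite /phi big1 // => j _; rewrite mxE. Qed.

Lemma uvZ r n (k : 'I_n) (x t : 'Z_(r.+2)) : x *: uv k t = uv k (x * t).
Proof. by apply/matrixP => i j; rewrite !mxE; case: eqP; rewrite ?mulr0. Qed.

Lemma pm_sign r (s : 'Z_(r.+2)) p : pm s -> pm ((-1) ^+ p * s).
Proof.
rewrite -signr_odd; case: (odd p); rewrite ?expr1 ?expr0 ?mul1r ?mulN1r //.
by rewrite /pm; case/orP => /eqP ->; rewrite ?opprK eqxx ?orbT.
Qed.

Lemma sign_mod (R : pzRingType) p1 p2 : p1 = p2 %[mod 2] -> (-1) ^+ p1 = (-1) ^+ p2 :> R.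
Proof. by move=> E; rewrite -signr_odd -(signr_odd _ p2) -!modn2 E. Qed.

Theorem theorem4 (q n : nat) :
  (4 <= q)%N -> ~~ odd q -> (3 <= n)%N -> odd n ->
  ~ exists G : 'Z_(q ^ n) -> 'rV['Z_q]_n,
      [/\ bijective G,
          (forall i : 'Z_(q ^ n), lee_dist (G i) (G (i + 1)) = 1%N) &
          (forall i : 'Z_(q ^ n), exists2 e : 'Z_(q ^ n),
              (e == 1) || (e == -1) &
              G i + const_mx 1 = G (i + (q ^ n.-1)%:R + e))].
Proof.
move=> Hq Hqe Hn Hno.
have [r Er] : exists r, q = r.+2 by exists q.-2; lia.
subst q.
have r0 : (0 < r)%N by lia.
have re : ~~ odd r by move: Hqe => /=; rewrite negbK.
move=> [G [[Ginv GK GinvK] Hd He]].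
set N := ((r.+2) ^ n)%N in G GK GinvK Hd He *.
set M := ((r.+2) ^ n.-1)%N in He *.
have hr : r = (2 * r./2)%N by rewrite -[LHS]odd_double_half (negbTE re) add0n -mul2n.
have EN : N = (r.+2 * M)%N by rewrite /N /M -expnS prednK //; lia.
have [h Eh h0] : exists2 h, M = (2 * h)%N & (0 < h)%N.
  exists ((r./2).+1 * r.+2 ^ (n.-2))%N.
    by rewrite /M -(prednK (_ : 0 < n.-1)%N) ?expnS ?mulnA; [congr (_ * _)%N; lia | lia].
  by rewrite muln_gt0 expn_gt0.
have M2 : (2 <= M)%N by rewrite Eh; lia.
have N1 : (1 < N)%N by rewrite EN; nia.
have vT k : val (k%:R : 'Z_N) = (k %% N)%N := val_Zp_nat N1 k.
have two0 : (2%:R : 'Z_N) != 0.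
  apply/eqP => /(congr1 val); rewrite vT modn_small //=; nia.
have Nz : (N%:R : 'Z_N) = 0 by apply: val_inj; rewrite vT modnn.
have om1 : (1 : 'Z_N) != -1.
  apply: (contraNneq _ (two0)) => h1; rewrite -natr1 (_ : 1%:R = 1) // {1}h1 addNr //.
have Ginj : injective G := can_inj GK.
pose eps i := Ginv (G i + const_mx 1) - i - M%:R.
have HG i : G (i + M%:R + eps i) = G i + const_mx 1.
  rewrite /eps (_ : i + M%:R + _ = Ginv (G i + const_mx 1)) ?GinvK //; ring.
have Hpm i : eps i = 1 \/ eps i = -1.
  have [e he E] := He i; rewrite /eps E GK.
  rewrite (_ : i + M%:R + e - i - M%:R = e); last by ring.
  by case/orP: he => /eqP ->; [left|right].
have two0' (i : 'Z_N) : i + 2%:R != i.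
  by apply: (contraNneq _ (two0)) => h2; rewrite -(addKr i 2%:R) h2 addNr.
have F1 i : eps i = 1 -> eps (i + 2%:R) = 1.
  move=> e1; case: (Hpm (i + 2%:R)) => // e2; exfalso.
  have := HG (i + 2%:R); have := HG i; rewrite e1 e2.
  rewrite (_ : i + 2%:R + M%:R + -1 = i + M%:R + 1); last by ring.
  move=> -> /addIr /Ginj h2; by move: (two0' i); rewrite -h2 eqxx.
have Fk k i : eps i = 1 -> eps (i + (2 * k)%:R) = 1.
  elim: k => [|k IH] e1; first by rewrite muln0 addr0.
  rewrite (_ : i + (2 * k.+1)%:R = i + (2 * k)%:R + 2%:R); last first.
    by rewrite mulnS natrD; ring.
  exact: F1 (IH e1).
have [H EH H0] : exists2 H, N = (2 * H)%N & (0 < H)%N.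
  by exists (r.+2 * h)%N; [rewrite EN Eh; ring | lia].
have Fb i : eps (i + 2%:R) = 1 -> eps i = 1.
  move=> /(Fk H.-1); rewrite -addrA -natrD (_ : (2 + 2 * H.-1 = N)%N); last by lia.
  by rewrite Nz addr0.
have Hper i : eps (i + 2%:R) = eps i.
  case: (Hpm i) => ei; case: (Hpm (i + 2%:R)) => ei2; rewrite ei ei2 //.
    by move: (F1 _ ei); rewrite ei2 => hh; move: om1; rewrite hh eqxx.
  by move: (Fb _ ei2); rewrite ei => hh; move: om1; rewrite hh eqxx.
have hb k i : (eps (i + k%:R + 1) == eps (i + k%:R)) = (eps (i + 1) == eps i).
  elim: k => [|k IH]; first by rewrite addr0.
  rewrite -natr1 addrA -IH eq_sym; congr (_ == _).
  by rewrite -[i + k%:R + 1 + 1]addrA (_ : (1 + 1 : 'Z_N) = 2%:R) ?Hper // -natr1.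
have hall j : (eps (j + 1) == eps j) = (eps 1 == eps 0).
  by have := hb (val j) 0; rewrite !add0r natr_Zp.
have NZq : ((r.+2)%:R : 'Z_(r.+2)) = 0.
  by apply: ord_inj; rewrite val_Zp_nat // modnn.
have constD (a b : 'Z_(r.+2)) : const_mx a + const_mx b = const_mx (a + b) :> 'rV_n.
  by apply/matrixP => i j; rewrite !mxE.
case: (boolP (eps 1 == eps 0)) => Hc.
-
  have hc k : eps (k%:R) = eps 0.
    elim: k => [//|k IH]; rewrite -natr1.
    by have := hall (k%:R); rewrite Hc IH => /eqP.
  have hc' j : eps j = eps 0 by rewrite -(natr_Zp j) hc.
  set c := eps 0 in hc hc'.
  have hG k : G (k%:R * (M%:R + c)) = G 0 + const_mx (k%:R).
    elim: k => [|k IH]; first by rewrite mul0r (_ : const_mx 0 = 0) ?addr0 //; apply/matrixP => i j; rewrite !mxE.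
    rewrite (_ : k.+1%:R * (M%:R + c) = k%:R * (M%:R + c) + M%:R + eps (k%:R * (M%:R + c))); last first.
      by rewrite hc' -natr1; ring.
    by rewrite HG IH -addrA constD natr1.
  have := hG r.+2; rewrite NZq (_ : const_mx 0 = 0) ?addr0; last by apply/matrixP => i j; rewrite !mxE.
  move=> /Ginj.
  rewrite mulrDr -natrM -EN Nz add0r.
  have : c = 1 \/ c = -1 by apply: Hpm.
  move=> cc hq; have hq' : ((r.+2)%:R : 'Z_N) = 0.
    by case: cc hq => ->; rewrite ?mulr1 ?mulrN1 // => /eqP; rewrite oppr_eq0 => /eqP.
  move/(congr1 val): hq'; rewrite vT modn_small //= EN; nia.
-
  rewrite (negbTE Hc) in hall.
  have hneg j : eps j = 1 -> eps (j + 1) = -1.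
    move=> ej; case: (Hpm (j + 1)) => // ej1.
    by move: (hall j); rewrite ej1 ej eqxx.
  have [i0 [ei0 ei01]] : exists i0, eps i0 = 1 /\ eps (i0 + 1) = -1.
    case: (Hpm 0) => e0.
      by exists 0; split => //; apply: hneg.
    have e1 : eps 1 = 1.
      case: (Hpm 1) => // e1; by move: Hc; rewrite e1 e0 eqxx.
    by exists 1; split => //; apply: hneg.
  have E1 m : eps (i0 + (2 * m)%:R) = 1 by apply: Fk.
  have E2 m : eps (i0 + (2 * m)%:R + 1) = -1 by apply: hneg.
  pose D j := G (j + 1) - G j.
  have unitD j : unitv (D j) by apply: lee1 r0 (Hd j).
  have R1 j : eps j = 1 -> eps (j + 1) = -1 -> D (j + M%:R) = - D j.
    move=> e1 e2; have := HG j; have := HG (j + 1); rewrite e1 e2.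
    rewrite (_ : j + 1 + M%:R + -1 = j + M%:R); last by ring.
    rewrite /D => A B; rewrite B A; apply/matrixP => a b; rewrite !mxE; ring.
  have R3 j : eps j = 1 -> eps (j + 1 + 1 + 1) = -1 ->
      D (j + 1 + M%:R) = D j + D (j + 1) + D (j + 1 + 1).
    move=> e1 e3; have := HG j; have := HG (j + 1 + 1 + 1); rewrite e1 e3.
    rewrite (_ : j + 1 + 1 + 1 + M%:R + -1 = j + 1 + M%:R + 1); last by ring.
    rewrite (_ : j + M%:R + 1 = j + 1 + M%:R); last by ring.
    rewrite /D => A B; rewrite A B; apply/matrixP => a b; rewrite !mxE; ring.
  have inj2 j : D j + D (j + 1) != 0.
    apply: contra_neq (two0' j) => h2; apply: Ginj; apply/eqP; rewrite -subr_eq0.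
    move: h2; rewrite /D (_ : j + 2%:R = j + 1 + 1); last by rewrite -natr1; ring.
    move=> h2; rewrite -h2; apply/eqP/matrixP => a b; rewrite !mxE; ring.
  have [k0 [s0 [ps0 Ea]]] := unitD i0.
  have hinv m : D (i0 + (2 * m)%:R) =
      (-1) ^+ phi k0 (G (i0 + (2 * m)%:R) - G i0) *: uv k0 s0.
    elim: m => [|m IH].
      by rewrite muln0 addr0 subrr phi0 expr0 scale1r.
    move: IH.
    set j := i0 + (2 * m)%:R.
    set p := phi k0 (G j - G i0) => IH.
    have Ej2 : i0 + (2 * m.+1)%:R = j + 1 + 1 by rewrite /j mulnS natrD -natr1; ring.
    rewrite Ej2.
    have pa : pm ((-1) ^+ p * s0) := pm_sign p ps0.
    rewrite uvZ in IH.
    have hac : uv k0 ((-1) ^+ p * s0) + D (j + 1) != 0 by rewrite -IH inj2.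
    have hcb : D (j + 1) + D (j + 1 + 1) != 0 := inj2 (j + 1).
    have hv : uv k0 ((-1) ^+ p * s0) + D (j + 1) + D (j + 1 + 1) = D (j + 1 + M%:R).
      rewrite -IH R3 //; first exact: E1.
      by rewrite -Ej2; apply: E2.
    have Hcl := classify r0 re pa (unitD (j + 1)) (unitD (j + 1 + 1)) (unitD (j + 1 + M%:R)) hac hcb hv.
    have Hphi : phi k0 (G (j + 1 + 1) - G i0) = addn p (phi k0 (D (j + 1))) %[mod 2].
      rewrite (_ : G (j + 1 + 1) - G i0 = (G j - G i0) + D j + D (j + 1)); last first.
        by apply/matrixP => a b; rewrite !mxE; ring.
      rewrite phi_add // -modnDml phi_add // modnDml IH phi_uv eqxx addn0.
      by [].
    rewrite (sign_mod _ Hphi) exprD uvZ.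
    case: Hcl => [[Eb Od]|[Eb Od]]; rewrite Eb.
      rewrite -(signr_odd _ (phi _ _)) Od expr1 uvN; congr uv; ring.
    rewrite -(signr_odd _ (phi _ _)) (negbTE Od) expr0 mulr1 //.
  have := hinv h; rewrite -Eh R1 // Ea.
  have Hph : phi k0 (G (i0 + M%:R) - G i0) = 0%N %[mod 2].
    have := HG (i0 + 1); rewrite ei01.
    rewrite (_ : i0 + 1 + M%:R + -1 = i0 + M%:R); last by ring.
    move=> ->.
    rewrite (_ : G (i0 + 1) + const_mx 1 - G i0 = D i0 + const_mx 1); last first.
      by apply/matrixP => a b; rewrite !mxE; ring.
    rewrite phi_add // Ea phi_uv eqxx phi_const1 add0n.
    have n0 : (0 < n)%N by lia.
    have Hno2 : ~~ odd n.-1 by move: Hno; rewrite -{1}(prednK n0).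
    by rewrite modn2 mod0n (negbTE Hno2).
  rewrite (sign_mod _ Hph) expr0 scale1r uvN => /(congr1 (fun w : 'rV_n => w ord0 k0)).
  rewrite !uvE eqxx => /eqP; rewrite eqr_oppLR -addr_eq0.
  case/orP: ps0 => /eqP ->; [exact/negP/two_neq0 | exact/negP/m2_neq0].
Qed.
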